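(* Let $V\subset\mathbb{Z}^2$ be site-connected. Then each vertex of the graph $B(V)$ has degree two. Consequently $B(V)$ is a vertex-disjoint union of vertex self-avoiding circuits and vertex self-avoiding doubly-infinite paths. If moreover $V$ is infinite, then $B(V)$ contains no vertex self-avoiding circuits.
   Context: Vertices $x,y\in\mathbb{Z}^2$ are site-neighbors if $\|x-y\|_1=1$. A set $W\subset\mathbb{Z}^2$ is site-connected if any two of its points are joined by a path of successive site-neighbors staying in $W$; a site-component of $W$ is a maximal site-connected subset. The closure $\overline{V}$ of $V\subset\mathbb{Z}^2$ is the union of $V$ with all finite site-components of $\mathbb{Z}^2\setminus V$. The dual lattice has vertex set $\mathbb{Z}^2+(\tfrac12,\tfrac12)$ and edges between points at Euclidean distance 1; each dual edge bisects a unique edge $\{x,y\}$ of $\mathbb{Z}^2$. The dual edge boundary $B(V)$ is the subgraph of the dual lattice induced by the set of dual edges whose bisecting edge $\{x,y\}$ has $x\in\overline{V}$ and $y\notin\overline{V}$. *)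

(* Defs.v *)
From Stdlib Require Import ZArith List Relations.
Open Scope Z_scope.

Definition pt := (Z * Z)%type.
Definition pset := pt -> Prop.

Definition site_adj (x y : pt) : Prop :=
  Z.abs (fst x - fst y) + Z.abs (snd x - snd y) = 1.

Definition site_joined (W : pset) (x y : pt) : Prop :=
  W x /\ W y /\
  clos_refl_trans pt (fun u v => W u /\ W v /\ site_adj u v) x y.

Definition site_connected (W : pset) : Prop :=
  forall x y, W x -> W y -> site_joined W x y.

Definition site_component (W C : pset) : Prop :=
  (exists x, C x) /\ (forall x, C x -> W x) /\ site_connected C /\
  (forall D : pset, (forall x, D x -> W x) -> site_connected D ->
     (forall x, C x -> D x) -> forall x, D x -> C x).

Definition finite_set (C : pset) : Prop :=
  exists l : list pt, forall x, C x -> In x l.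

Definition closure (V : pset) : pset :=
  fun x => V x \/
    exists C, site_component (fun y => ~ V y) C /\ finite_set C /\ C x.

(* Dual lattice: the integer pair d represents the dual vertex d + (1/2,1/2).
   Dual vertices are adjacent iff at Euclidean distance 1. *)
Definition dual_adj (d e : pt) : Prop :=
  (fst d - fst e) ^ 2 + (snd d - snd e) ^ 2 = 1.

(* the dual edge {d,e} bisects the primal edge {x,y}: both are edges and they
   have the same midpoint, i.e. x + y = (d + (1/2,1/2)) + (e + (1/2,1/2)). *)
Definition bisects (d e x y : pt) : Prop :=
  dual_adj d e /\ site_adj x y /\
  fst x + fst y = fst d + fst e + 1 /\ snd x + snd y = snd d + snd e + 1.

Definition B_edge (V : pset) (d e : pt) : Prop :=
  exists x y, bisects d e x y /\ closure V x /\ ~ closure V y.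

Definition B_vertex (V : pset) (d : pt) : Prop := exists e, B_edge V d e.

Definition degree_two (V : pset) (d : pt) : Prop :=
  exists e1 e2, e1 <> e2 /\ B_edge V d e1 /\ B_edge V d e2 /\
    forall e, B_edge V d e -> e = e1 \/ e = e2.

Definition B_conn (V : pset) : relation pt := clos_refl_trans pt (B_edge V).

Definition B_circuit (V : pset) (n : nat) (c : nat -> pt) : Prop :=
  (3 <= n)%nat /\
  (forall i j, (i < n)%nat -> (j < n)%nat -> c i = c j -> i = j) /\
  (forall i, (i < n)%nat -> B_edge V (c i) (c (Nat.modulo (S i) n))).

Definition component_is_circuit (V : pset) (d : pt) : Prop :=
  exists n c, B_circuit V n c /\
    (forall v, B_conn V d v <-> exists i, (i < n)%nat /\ v = c i) /\
    (forall u v, B_conn V d u ->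
       (B_edge V u v <-> exists i, (i < n)%nat /\
          ((u = c i /\ v = c (Nat.modulo (S i) n)) \/
           (v = c i /\ u = c (Nat.modulo (S i) n))))).

Definition component_is_biinf_path (V : pset) (d : pt) : Prop :=
  exists f : Z -> pt,
    (forall i j, f i = f j -> i = j) /\
    (forall i, B_edge V (f i) (f (i + 1))) /\
    (forall v, B_conn V d v <-> exists i, v = f i) /\
    (forall u v, B_conn V d u ->
       (B_edge V u v <-> exists i,
          (u = f i /\ v = f (i + 1)) \/ (v = f i /\ u = f (i + 1)))).

(* Main.v *)
Require Import Defs.
From Stdlib Require Import ZArith List Relations.
From Stdlib Require Import Lia Bool Classical ClassicalEpsilon.
Open Scope Z_scope.

Definition cr (q u v : pt) : bool :=
  ((snd u =? snd q) && (snd v =? snd q + 1) && (fst q <? fst u)) ||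
  ((snd v =? snd q) && (snd u =? snd q + 1) && (fst q <? fst v)).

Definition king (u v : pt) : Prop :=
  Z.abs (fst u - fst v) <= 1 /\ Z.abs (snd u - snd v) <= 1.

Definition peqb (u a : pt) : bool := (fst u =? fst a) && (snd u =? snd a).
Definition edge_is (u v a b : pt) : bool :=
  (peqb u a && peqb v b) || (peqb u b && peqb v a).

Ltac kcase :=
  match goal with
  | H : Z.abs (?u1 - ?v1) <= 1 /\ Z.abs (?u2 - ?v2) <= 1 |- _ =>
     let H1 := fresh in let H2 := fresh in destruct H as [H1 H2];
     assert (v1 = u1 - 1 \/ v1 = u1 \/ v1 = u1 + 1) as [ -> | [ -> | -> ] ] by lia;
     assert (v2 = u2 - 1 \/ v2 = u2 \/ v2 = u2 + 1) as [ -> | [ -> | -> ] ] by lia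
  | H : Z.abs (?u1 - ?v1) + Z.abs (?u2 - ?v2) = 1 |- _ =>
     assert ((v1 = u1 - 1 /\ v2 = u2) \/ (v1 = u1 + 1 /\ v2 = u2) \/ (v1 = u1 /\ v2 = u2 - 1) \/ (v1 = u1 /\ v2 = u2 + 1)) as [ [ -> -> ] | [ [ -> -> ] | [ [ -> -> ] | [ -> -> ] ] ] ] by lia
  end.
Ltac brute :=
  repeat match goal with
  | |- context [?a =? ?b] => destruct (Z.eqb_spec a b); try (exfalso; lia)
  | |- context [?a <? ?b] => destruct (Z.ltb_spec a b); try (exfalso; lia)
  | |- context [?a <=? ?b] => destruct (Z.leb_spec a b); try (exfalso; lia)
  end; simpl; try reflexivity; try (exfalso; lia).

Lemma idH (q u v : pt) : king u v ->
  ~ (fst u = fst q + 1 /\ snd u = snd q) -> ~ (fst v = fst q + 1 /\ snd v = snd q) ->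
  cr q u v = cr (fst q + 1, snd q) u v.
Proof.
  destruct q as [q1 q2], u as [u1 u2], v as [v1 v2]; unfold king, cr; simpl; intros; kcase; brute.
Qed.

Lemma idV (q u v : pt) : king u v ->
  ~ (fst u = fst q /\ snd u = snd q) -> ~ (fst v = fst q /\ snd v = snd q) ->
  ~ (fst u = fst q /\ snd u = snd q + 1) -> ~ (fst v = fst q /\ snd v = snd q + 1) ->
  xorb (xorb (cr q u v) (cr (fst q, snd q + 1) u v))
    (xorb ((snd u =? snd q + 1) && (fst q <? fst u)) ((snd v =? snd q + 1) && (fst q <? fst v))) = false.
Proof.
  destruct q as [q1 q2], u as [u1 u2], v as [v1 v2]; unfold king, cr; simpl; intros; kcase; brute.
Qed.

Lemma idD (d u v : pt) : king u v ->
  ~ (fst u = fst d + 1 /\ snd u = snd d) -> ~ (fst v = fst d + 1 /\ snd v = snd d) ->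
  ~ (fst u = fst d /\ snd u = snd d + 1) -> ~ (fst v = fst d /\ snd v = snd d + 1) ->
  xorb (xorb (cr (fst d + 1, snd d) u v) (cr (fst d, snd d + 1) u v))
    (xorb ((snd u =? snd d + 1) && (fst d <? fst u)) ((snd v =? snd d + 1) && (fst d <? fst v)))
  = edge_is u v d (fst d + 1, snd d + 1).
Proof.
  destruct d as [q1 q2], u as [u1 u2], v as [v1 v2]; unfold king, cr, edge_is, peqb; simpl; intros; kcase; brute.
Qed.

Lemma idA (d u v : pt) : king u v ->
  ~ (fst u = fst d /\ snd u = snd d) -> ~ (fst v = fst d /\ snd v = snd d) ->
  ~ (fst u = fst d + 1 /\ snd u = snd d + 1) -> ~ (fst v = fst d + 1 /\ snd v = snd d + 1) ->
  xorb (xorb (cr d u v) (cr (fst d + 1, snd d + 1) u v))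
    (xorb ((snd u =? snd d + 1) && (fst d <? fst u)) ((snd v =? snd d + 1) && (fst d <? fst v)))
  = edge_is u v (fst d + 1, snd d) (fst d, snd d + 1).
Proof.
  destruct d as [q1 q2], u as [u1 u2], v as [v1 v2]; unfold king, cr, edge_is, peqb; simpl; intros; kcase; brute.
Qed.

Lemma idL (q u v : pt) : king u v -> fst q < fst u -> fst q < fst v ->
  cr q u v = xorb (snd u <=? snd q) (snd v <=? snd q).
Proof.
  destruct q as [q1 q2], u as [u1 u2], v as [v1 v2]; unfold king, cr; simpl; intros; kcase; brute.
Qed.

Definition bis_b (a b x y : pt) : bool :=
  (fst x + fst y =? fst a + fst b + 1) && (snd x + snd y =? snd a + snd b + 1).

Definition unitb (u v : pt) : Prop := Z.abs (fst u - fst v) + Z.abs (snd u - snd v) = 1.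

Lemma idDH (q u v : pt) : unitb u v ->
  xorb (cr (fst q - 1, snd q - 1) u v) (cr (fst q, snd q - 1) u v) = bis_b u v q (fst q + 1, snd q).
Proof.
  destruct q as [q1 q2], u as [u1 u2], v as [v1 v2]; unfold unitb, cr, bis_b; simpl; intros; kcase; brute.
Qed.

Lemma idDV (q u v : pt) : unitb u v ->
  xorb (xorb (cr (fst q - 1, snd q - 1) u v) (cr (fst q - 1, snd q) u v))
   (xorb ((snd u =? snd q) && (fst q - 1 <? fst u)) ((snd v =? snd q) && (fst q - 1 <? fst v)))
  = bis_b u v q (fst q, snd q + 1).
Proof.
  destruct q as [q1 q2], u as [u1 u2], v as [v1 v2]; unfold unitb, cr, bis_b; simpl; intros; kcase; brute.
Qed.

Fixpoint wx (f : pt -> pt -> bool) (w : nat -> pt) (n : nat) : bool :=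
  match n with O => false | S k => xorb (wx f w k) (f (w k) (w (S k))) end.

Lemma wx_ext f h w n : (forall k, (k < n)%nat -> f (w k) (w (S k)) = h (w k) (w (S k))) ->
  wx f w n = wx h w n.
Proof. induction n; simpl; intros H; auto. rewrite IHn by (intros; apply H; lia). rewrite H by lia. auto. Qed.

Lemma wx_xor f h w n : wx (fun u v => xorb (f u v) (h u v)) w n = xorb (wx f w n) (wx h w n).
Proof. induction n; simpl; auto. rewrite IHn. destruct (wx f w n), (wx h w n), (f (w n) (w (S n))), (h (w n) (w (S n))); reflexivity. Qed.

Lemma wx_tele (g : pt -> bool) w n : wx (fun u v => xorb (g u) (g v)) w n = xorb (g (w 0%nat)) (g (w n)).
Proof. induction n; simpl. { destruct (g (w 0%nat)); auto. } rewrite IHn. destruct (g (w 0%nat)), (g (w n)), (g (w (S n))); auto. Qed.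

Lemma wx_false f w n : (forall k, (k < n)%nat -> f (w k) (w (S k)) = false) -> wx f w n = false.
Proof. induction n; simpl; intros H; auto. rewrite IHn by (intros; apply H; lia). rewrite H by lia. auto. Qed.

Lemma wx_one f w n j : (j < n)%nat -> f (w j) (w (S j)) = true ->
  (forall k, (k < n)%nat -> k <> j -> f (w k) (w (S k)) = false) -> wx f w n = true.
Proof.
  induction n; simpl; intros Hj Hf H. lia.
  destruct (Nat.eq_dec j n) as [->|Hne].
  - rewrite wx_false. rewrite Hf; auto. intros; apply H; lia.
  - rewrite IHn; [ rewrite H; auto | lia | auto | intros; apply H; lia ].
Qed.

Lemma wx_combine f1 f2 s (g : pt -> bool) w n : w n = w 0%nat ->
  (forall k, (k < n)%nat -> xorb (xorb (f1 (w k) (w (S k))) (f2 (w k) (w (S k))))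
          (xorb (g (w k)) (g (w (S k)))) = s (w k) (w (S k))) ->
  xorb (wx f1 w n) (wx f2 w n) = wx s w n.
Proof.
  intros Hc H. rewrite <- (wx_ext (fun u v => xorb (xorb (f1 u v) (f2 u v)) (xorb (g u) (g v))) _ _ _ H). rewrite wx_xor. rewrite (wx_xor f1 f2). rewrite (wx_tele g). rewrite Hc.
  destruct (g (w 0%nat)), (wx f1 w n), (wx f2 w n); reflexivity.
Qed.

Definition P (w : nat -> pt) (n : nat) (q : pt) : bool := wx (cr q) w n.

Lemma bound_walk (w : nat -> pt) n : exists M, forall k, (k <= n)%nat ->
  Z.abs (fst (w k)) <= M /\ Z.abs (snd (w k)) <= M.
Proof.
  induction n.
  - exists (Z.abs (fst (w 0%nat)) + Z.abs (snd (w 0%nat))). intros k Hk.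
    assert (k = 0%nat) by lia; subst. lia.
  - destruct IHn as [M HM]. exists (M + Z.abs (fst (w (S n))) + Z.abs (snd (w (S n)))).
    intros k Hk. pose proof (HM 0%nat ltac:(lia)). destruct (Nat.eq_dec k (S n)) as [->|]. lia.
    specialize (HM k ltac:(lia)). lia.
Qed.

Lemma P_box w n M q : w n = w 0%nat ->
  (forall k, (k < n)%nat -> king (w k) (w (S k))) ->
  (forall k, (k <= n)%nat -> Z.abs (fst (w k)) <= M /\ Z.abs (snd (w k)) <= M) ->
  P w n q = true -> Z.abs (fst q) <= M + 1 /\ Z.abs (snd q) <= M + 1.
Proof.
  intros Hc Hk HM HP. unfold P in HP.
  destruct (Z_lt_le_dec (fst q) (-M)) as [Hl|Hl].
  - rewrite (wx_ext _ (fun u v => xorb (snd u <=? snd q) (snd v <=? snd q))) in HP.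
    + rewrite wx_tele, Hc in HP. destruct (snd (w 0%nat) <=? snd q); discriminate.
    + intros k Hkn. apply idL; auto.
      * specialize (HM k ltac:(lia)); lia.
      * specialize (HM (S k) ltac:(lia)); lia.
  - assert (exists k, (k < n)%nat /\ cr q (w k) (w (S k)) = true) as [k [Hkn Hcr]].
    { clear -HP. induction n; simpl in HP. discriminate.
      destruct (cr q (w n) (w (S n))) eqn:E. exists n; split; auto.
      rewrite xorb_false_r in HP. destruct (IHn HP) as [k [? ?]]. exists k; split; auto. }
    pose proof (HM k ltac:(lia)). pose proof (HM (S k) ltac:(lia)).
    unfold cr in Hcr. destruct (w k) as [a1 a2], (w (S k)) as [b1 b2]. simpl in *.
    apply orb_true_iff in Hcr. rewrite !andb_true_iff, !Z.eqb_eq, !Z.ltb_lt in Hcr. lia.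
Qed.

Definition zrange (a : Z) (len : nat) : list Z := map (fun k => a + Z.of_nat k) (seq 0 len).
Lemma zrange_in a len x : a <= x < a + Z.of_nat len -> In x (zrange a len).
Proof.
  intros H. unfold zrange. apply in_map_iff. exists (Z.to_nat (x - a)). split. lia.
  apply in_seq. lia.
Qed.

Lemma box_finite (S : pset) M : (forall x, S x -> Z.abs (fst x) <= M /\ Z.abs (snd x) <= M) ->
  finite_set S.
Proof.
  intros H. exists (list_prod (zrange (-M) (Z.to_nat (2*M+1))) (zrange (-M) (Z.to_nat (2*M+1)))).
  intros [x1 x2] Hx. apply H in Hx. simpl in Hx. apply in_prod; apply zrange_in; lia.
Qed.

Definition adjR (W : pset) : relation pt := fun u v => W u /\ W v /\ site_adj u v.

Lemma site_adj_sym x y : site_adj x y -> site_adj y x.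
Proof. unfold site_adj; lia. Qed.

Lemma rt_mono (W W' : pset) x y : (forall z, W z -> W' z) ->
  clos_refl_trans pt (adjR W) x y -> clos_refl_trans pt (adjR W') x y.
Proof.
  intros H Hr. induction Hr.
  - apply rt_step. destruct H0 as (?&?&?). repeat split; auto.
  - apply rt_refl.
  - eapply rt_trans; eauto.
Qed.

Lemma rt_sym (W : pset) x y : clos_refl_trans pt (adjR W) x y -> clos_refl_trans pt (adjR W) y x.
Proof.
  intros Hr. induction Hr.
  - apply rt_step. destruct H as (?&?&?). repeat split; auto. apply site_adj_sym; auto.
  - apply rt_refl.
  - eapply rt_trans; eauto.
Qed.

Lemma comp_absorb (W C D : pset) : site_component W C -> (forall x, D x -> W x) ->
  site_connected D -> (exists u, C u /\ D u) -> forall x, D x -> C x.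
Proof.
  intros [HCne [HCW [HCc HCmax]]] HDW HDc [u [HCu HDu]].
  set (D' := fun x => C x \/ D x).
  assert (Hto : forall x, D' x -> clos_refl_trans pt (adjR D') x u).
  { intros x [Hx|Hx].
    - destruct (HCc x u Hx HCu) as (_&_&Hr). eapply rt_mono; [|exact Hr]. unfold D'; auto.
    - destruct (HDc x u Hx HDu) as (_&_&Hr). eapply rt_mono; [|exact Hr]. unfold D'; auto. }
  intros x0 Hx0. apply (HCmax D'); [| | | right; exact Hx0].
  - intros x [Hx|Hx]; auto.
  - intros x y Hx Hy. split; [auto|split; [auto|]].
    eapply rt_trans; [apply Hto; auto|]. apply rt_sym, Hto; auto.
  - unfold D'; auto.
Qed.

Lemma pair_conn (W : pset) x y : W x -> W y -> site_adj x y ->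
  site_connected (fun w => w = x \/ w = y).
Proof.
  intros Hx Hy Ha a b Ha' Hb'. split; [auto|split; [auto|]].
  destruct Ha' as [->| ->], Hb' as [->| ->]; try apply rt_refl; apply rt_step;
    repeat split; auto; apply site_adj_sym; auto.
Qed.

Lemma KL V x y : closure V x -> ~ closure V y -> site_adj x y -> V x.
Proof.
  intros [Hx|[C [HC [Hf HCx]]]] Hy Hxy; auto.
  exfalso. apply Hy. right. exists C. split; [auto|split; [auto|]].
  destruct (classic (V y)) as [Vy|nVy]. { exfalso; apply Hy; left; auto. }
  assert (nVx : ~ V x) by (apply (proj1 (proj2 HC)); auto).
  apply (comp_absorb _ _ (fun w => w = x \/ w = y) HC).
  - intros w [->| ->]; auto.
  - apply (pair_conn (fun w => ~ V w)); auto.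
  - exists x; auto.
  - auto.
Qed.

Lemma trap V (S : pset) M z : (forall x, S x -> Z.abs (fst x) <= M /\ Z.abs (snd x) <= M) ->
  ~ closure V z -> S z ->
  (forall u v, site_adj u v -> ~ closure V u -> ~ closure V v -> S u -> S v) -> False.
Proof.
  intros Hbox Hz HSz Hstep.
  set (W := fun y => ~ V y).
  assert (Wz : W z) by (intro; apply Hz; left; auto).
  set (K := fun w => site_joined W z w).
  assert (HK : forall w, K w -> ~ closure V w /\ S w).
  { intros w (_&_&Hr). apply clos_rt_rtn1_iff in Hr. induction Hr as [|u w Huw Hr IH]; auto.
    destruct IH as [IH1 IH2]. destruct Huw as (Wu&Ww&Hadj).
    assert (~ closure V w).
    { intros [Vw|[C [HC [Hf HCw]]]]. apply Ww; auto.
      apply IH1. right. exists C. split; [auto|split; [auto|]].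
      apply (comp_absorb _ _ (fun t => t = u \/ t = w) HC).
      - intros t [->| ->]; auto.
      - apply (pair_conn W); auto.
      - exists w; auto.
      - auto. }
    split; auto. eapply Hstep; eauto. }
  apply Hz. right. exists K. split; [|split].
  - split; [exists z; split; [auto|split; [auto|apply rt_refl]]|split].
    + intros x (_&Hx&_); auto.
    + split.
      * intros x y Hx Hy. split; auto. split; auto.
        assert (Hg : forall t, K t -> clos_refl_trans pt (adjR K) z t).
        { intros t (_&_&Hr). apply clos_rt_rtn1_iff in Hr.
          induction Hr as [|u t Hut Hr IH]. apply rt_refl.
          eapply rt_trans; [exact IH|]. apply rt_step. destruct Hut as (Wu&Wt&Ha).
          split; [|split; auto].
          - split; auto. split; auto. apply clos_rt_rtn1_iff; auto.
          - split; auto. split; auto. apply clos_rt_rtn1_iff. econstructor; eauto. all: try (split; auto). }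
        eapply rt_trans; [apply rt_sym, Hg; auto| apply Hg; auto].
      * intros D HDW HDc HKD x Hx.
        assert (Dz : D z) by (apply HKD; split; [auto|split; [auto|apply rt_refl]]).
        destruct (HDc z x Dz Hx) as (_&_&Hr). split; [exact Wz|split; [exact (HDW x Hx)|]].
        eapply rt_mono; [|exact Hr]. auto.
  - apply (box_finite _ M). intros x Hx. apply Hbox, HK, Hx.
  - split; [auto|split; [auto|apply rt_refl]].
Qed.

Lemma V_in_S V (S : pset) x : site_connected V -> V x -> S x ->
  (forall u v, site_adj u v -> V u -> V v -> S u -> S v) -> forall v, V v -> S v.
Proof.
  intros HV Vx Sx Hstep v Vv. destruct (HV x v Vx Vv) as (_&_&Hr).
  apply clos_rt_rtn1_iff in Hr. induction Hr as [|u w Huw Hr IH]; auto.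
  destruct Huw as (?&?&?). eapply Hstep; eauto.
Qed.

Lemma sq1 a b : a ^ 2 + b ^ 2 = 1 -> Z.abs a + Z.abs b = 1.
Proof.
  intros H. assert (-1 <= a <= 1) by nia. assert (-1 <= b <= 1) by nia.
  assert (a = -1 \/ a = 0 \/ a = 1) as [ ->|[ ->| ->]] by lia;
  assert (b = -1 \/ b = 0 \/ b = 1) as [ ->|[ ->| ->]] by lia; simpl in *; lia.
Qed.

Lemma dual_adj_unit d e : dual_adj d e <-> unitb d e.
Proof.
  unfold dual_adj, unitb. split. apply sq1.
  intros H. set (a := fst d - fst e) in *. set (b := snd d - snd e) in *.
  assert (a = -1 \/ a = 0 \/ a = 1) as [ ->|[ ->| ->]] by lia;
  assert (b = -1 \/ b = 0 \/ b = 1) as [ ->|[ ->| ->]] by lia; simpl in *; lia.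
Qed.

Lemma bisects_iff d e x y : bisects d e x y <-> unitb d e /\ unitb x y /\ bis_b d e x y = true.
Proof.
  unfold bisects, bis_b. rewrite dual_adj_unit, andb_true_iff, !Z.eqb_eq. unfold site_adj, unitb.
  intuition lia.
Qed.

Lemma bisects_sym d e x y : bisects d e x y -> bisects d e y x.
Proof. unfold bisects, site_adj. intuition lia. Qed.

Lemma bisects_symd d e x y : bisects d e x y -> bisects e d x y.
Proof. unfold bisects, dual_adj, site_adj. intuition nia. Qed.

Lemma bedge_sym V d e : B_edge V d e -> B_edge V e d.
Proof. intros (x&y&H&?&?). exists x, y. split; auto. apply bisects_symd; auto. Qed.

Lemma bedge_irr V d : ~ B_edge V d d.
Proof. intros (x&y&(H&_)&_). unfold dual_adj in H. lia. Qed.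

Lemma pt_eq (a b : pt) : fst a = fst b -> snd a = snd b -> a = b.
Proof. destruct a, b; simpl; intros -> ->; auto. Qed.

Lemma bis_uniq_primal d e x y x' y' : bisects d e x y -> bisects d e x' y' ->
  (x = x' /\ y = y') \/ (x = y' /\ y = x').
Proof.
  rewrite !bisects_iff. destruct d as [d1 d2], e as [e1 e2], x as [x1 x2], y as [y1 y2], x' as [a1 a2], y' as [b1 b2].
  unfold unitb, bis_b; simpl. rewrite !andb_true_iff, !Z.eqb_eq. intros.
  assert ((x1 = a1 /\ x2 = a2 /\ y1 = b1 /\ y2 = b2) \/ (x1 = b1 /\ x2 = b2 /\ y1 = a1 /\ y2 = a2)) by lia.
  intuition (subst; auto).
Qed.

Lemma bis_uniq_dual d e d' e' x y : bisects d e x y -> bisects d' e' x y ->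
  (d = d' /\ e = e') \/ (d = e' /\ e = d').
Proof.
  rewrite !bisects_iff. destruct d as [d1 d2], e as [e1 e2], x as [x1 x2], y as [y1 y2], d' as [a1 a2], e' as [b1 b2].
  unfold unitb, bis_b; simpl. rewrite !andb_true_iff, !Z.eqb_eq. intros.
  assert ((d1 = a1 /\ d2 = a2 /\ e1 = b1 /\ e2 = b2) \/ (d1 = b1 /\ d2 = b2 /\ e1 = a1 /\ e2 = a2)) by lia.
  intuition (subst; auto).
Qed.

Definition X V a b := (closure V a /\ ~ closure V b) \/ (closure V b /\ ~ closure V a).

Ltac bisgoal := rewrite bisects_iff; unfold unitb, bis_b; simpl; rewrite andb_true_iff, !Z.eqb_eq; lia.

Lemma bedge_char V (d1 d2 : Z) e : B_edge V (d1, d2) e <->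
  (e = (d1 + 1, d2) /\ X V (d1 + 1, d2) (d1 + 1, d2 + 1)) \/
  (e = (d1 - 1, d2) /\ X V (d1, d2) (d1, d2 + 1)) \/
  (e = (d1, d2 + 1) /\ X V (d1, d2 + 1) (d1 + 1, d2 + 1)) \/
  (e = (d1, d2 - 1) /\ X V (d1, d2) (d1 + 1, d2)).
Proof.
  split.
  - intros (x&y&Hb&Hx&Hy). rewrite bisects_iff in Hb. destruct e as [e1 e2], x as [x1 x2], y as [y1 y2].
    unfold unitb, bis_b in Hb; simpl in Hb. rewrite andb_true_iff, !Z.eqb_eq in Hb.
    destruct Hb as (Hde & Hxy & Hs1 & Hs2).
    assert ((e1 = d1+1 /\ e2 = d2) \/ (e1 = d1-1 /\ e2 = d2) \/ (e1 = d1 /\ e2 = d2+1) \/ (e1 = d1 /\ e2 = d2-1))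
      as [(->&->)|[(->&->)|[(->&->)|(->&->)]]] by lia.
    + assert (x1 = d1+1 /\ y1 = d1+1 /\ ((x2 = d2 /\ y2 = d2+1) \/ (x2 = d2+1 /\ y2 = d2))) as (->&->&[(->&->)|(->&->)]) by lia;
      unfold X; tauto.
    + assert (x1 = d1 /\ y1 = d1 /\ ((x2 = d2 /\ y2 = d2+1) \/ (x2 = d2+1 /\ y2 = d2))) as (->&->&[(->&->)|(->&->)]) by lia;
      unfold X; tauto.
    + assert (x2 = d2+1 /\ y2 = d2+1 /\ ((x1 = d1 /\ y1 = d1+1) \/ (x1 = d1+1 /\ y1 = d1))) as (->&->&[(->&->)|(->&->)]) by lia;
      unfold X; tauto.
    + assert (x2 = d2 /\ y2 = d2 /\ ((x1 = d1 /\ y1 = d1+1) \/ (x1 = d1+1 /\ y1 = d1))) as (->&->&[(->&->)|(->&->)]) by lia;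
      unfold X; tauto.
  - intros [(->&[[Ha Hb]|[Ha Hb]])|[(->&[[Ha Hb]|[Ha Hb]])|[(->&[[Ha Hb]|[Ha Hb]])|(->&[[Ha Hb]|[Ha Hb]])]]];
    eexists; eexists; (split; [|split; [exact Ha|exact Hb]]); bisgoal.
Qed.

Ltac solve_deg e1 e2 :=
  exists e1, e2; split; [intro Hee; inversion Hee; lia|];
  split; [apply bedge_char; unfold X; tauto|];
  split; [apply bedge_char; unfold X; tauto|];
  let e := fresh "e" in let He := fresh "He" in let HX := fresh "HX" in
  intros e He; apply bedge_char in He;
  destruct He as [(->&HX)|[(->&HX)|[(->&HX)|(->&HX)]]];
  first [left; reflexivity | right; reflexivity | exfalso; unfold X in HX; tauto].

Lemma deg2_of V d1 d2 :
  ~ (closure V (d1,d2) /\ closure V (d1+1,d2+1) /\ ~ closure V (d1+1,d2) /\ ~ closure V (d1,d2+1)) ->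
  ~ (closure V (d1+1,d2) /\ closure V (d1,d2+1) /\ ~ closure V (d1,d2) /\ ~ closure V (d1+1,d2+1)) ->
  B_vertex V (d1, d2) -> degree_two V (d1, d2).
Proof.
  intros N1 N2 [e0 He0]. apply bedge_char in He0.
  destruct (classic (closure V (d1,d2))), (classic (closure V (d1+1,d2))),
    (classic (closure V (d1,d2+1))), (classic (closure V (d1+1,d2+1)));
  try (exfalso; unfold X in He0; tauto);
  first [ solve_deg (d1+1,d2) (d1-1,d2) | solve_deg (d1+1,d2) (d1,d2+1) | solve_deg (d1+1,d2) (d1,d2-1)
        | solve_deg (d1-1,d2) (d1,d2+1) | solve_deg (d1-1,d2) (d1,d2-1) | solve_deg (d1,d2+1) (d1,d2-1) ].
Qed.

Lemma neq_excl (u p : pt) : u <> p -> ~ (fst u = fst p /\ snd u = snd p).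
Proof. intros H [h1 h2]. apply H, pt_eq; auto. Qed.

Ltac excl := match goal with |- ~ (fst ?u = ?a /\ snd ?u = ?b) => apply (neq_excl u (a,b)); auto end.

Lemma P_right w n q1 q2 : (forall k, (k <= n)%nat -> w k <> (q1 + 1, q2)) ->
  (forall k, (k < n)%nat -> king (w k) (w (S k))) ->
  P w n (q1, q2) = P w n (q1 + 1, q2).
Proof.
  intros Hne Hk. unfold P. apply wx_ext. intros k Hkn. apply idH; [apply Hk; lia| |].
  - apply (neq_excl _ (q1 + 1, q2)). apply Hne; lia.
  - apply (neq_excl _ (q1 + 1, q2)). apply Hne; lia.
Qed.

Lemma P_up w n q1 q2 : w n = w 0%nat ->
  (forall k, (k <= n)%nat -> w k <> (q1, q2) /\ w k <> (q1, q2 + 1)) ->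
  (forall k, (k < n)%nat -> king (w k) (w (S k))) ->
  P w n (q1, q2) = P w n (q1, q2 + 1).
Proof.
  intros Hc Hne Hk. unfold P; simpl in *.
  assert (H := wx_combine (cr (q1,q2)) (cr (q1, q2 + 1)) (fun _ _ => false)
     (fun w0 => (snd w0 =? q2 + 1) && (q1 <? fst w0)) w n Hc).
  rewrite (wx_false (fun _ _ => false) w n) in H by (intros; reflexivity).
  assert (H' : xorb (wx (cr (q1,q2)) w n) (wx (cr (q1, q2 + 1)) w n) = false).
  { apply H. intros k Hkn. destruct (Hne k ltac:(lia)), (Hne (S k) ltac:(lia)).
    apply idV; [apply Hk; lia| excl ..]. }
  destruct (wx (cr (q1,q2)) w n), (wx (cr (q1, q2 + 1)) w n); simpl in H'; congruence.
Qed.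

Lemma P_step w n u v : w n = w 0%nat ->
  (forall k, (k < n)%nat -> king (w k) (w (S k))) ->
  (forall k, (k <= n)%nat -> w k <> u /\ w k <> v) ->
  site_adj u v -> P w n u = P w n v.
Proof.
  intros Hc Hk Hne Ha. destruct u as [u1 u2], v as [v1 v2]. unfold site_adj in Ha; simpl in Ha.
  assert ((v1 = u1 + 1 /\ v2 = u2) \/ (v1 = u1 - 1 /\ v2 = u2) \/ (v1 = u1 /\ v2 = u2 + 1) \/ (v1 = u1 /\ v2 = u2 - 1))
    as [(->&->)|[(->&->)|[(->&->)|(->&->)]]] by lia.
  - apply (P_right w n u1 u2); auto. intros k Hkn; apply Hne; auto.
  - symmetry. replace (u1, u2) with (u1 - 1 + 1, u2) by (f_equal; lia).
    apply P_right; auto. intros k Hkn. replace (u1 - 1 + 1) with u1 by lia. apply Hne; auto.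
  - apply (P_up w n u1 u2); auto.
  - symmetry. replace (u1, u2) with (u1, u2 - 1 + 1) by (f_equal; lia).
    apply P_up; auto. intros k Hkn. replace (u2 - 1 + 1) with u2 by lia.
    destruct (Hne k Hkn); auto.
Qed.

Lemma path_walk (R : relation pt) x y : clos_refl_trans pt R x y ->
  exists m w, w 0%nat = x /\ w m = y /\ forall k, (k < m)%nat -> R (w k) (w (S k)).
Proof.
  intros H. apply clos_rt_rtn1_iff in H. induction H as [|y z Hyz Hr IH].
  - exists 0%nat, (fun _ => x). repeat split; auto. intros; lia.
  - destruct IH as (m&w&H0&Hm&Hs). exists (S m), (fun k => if (k <=? m)%nat then w k else z).
    repeat split.
    + simpl. auto.
    + rewrite (proj2 (Nat.leb_gt (S m) m)) by lia. auto.
    + intros k Hk. destruct (Nat.eq_dec k m) as [->|Hne].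
      * rewrite Nat.leb_refl, (proj2 (Nat.leb_gt (S m) m)) by lia. rewrite Hm. auto.
      * rewrite (proj2 (Nat.leb_le k m)) by lia. rewrite (proj2 (Nat.leb_le (S k) m)) by lia. apply Hs; lia.
Qed.


Lemma adj_king u v : site_adj u v -> king u v.
Proof. unfold site_adj, king. lia. Qed.

Lemma closing_walk V a b : site_joined V a b -> king b a ->
  exists W n, W n = W 0%nat /\ W 0%nat = a /\ (forall k, (k <= n)%nat -> V (W k)) /\
    (forall k, (k < n)%nat -> king (W k) (W (S k))) /\
    (forall f, (forall u v, site_adj u v -> f u v = false) -> f b a = true -> wx f W n = true).
Proof.
  intros (Va&Vb&Hr) Hba. destruct (path_walk _ _ _ Hr) as (m&w&H0&Hm&Hs).
  set (W := fun k => if (k <=? m)%nat then w k else a).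
  assert (HW1 : forall k, (k <= m)%nat -> W k = w k).
  { intros k Hk. unfold W. rewrite (proj2 (Nat.leb_le k m)) by lia. auto. }
  assert (HW2 : W (S m) = a).
  { unfold W. rewrite (proj2 (Nat.leb_gt (S m) m)) by lia. auto. }
  exists W, (S m). split; [|split; [|split; [|split]]].
  - rewrite HW2, HW1 by lia. auto.
  - rewrite HW1 by lia. auto.
  - intros k Hk. destruct (Nat.eq_dec k (S m)) as [->|Hne]. rewrite HW2; auto.
    rewrite HW1 by lia. destruct k. rewrite H0; auto. destruct (Hs k ltac:(lia)) as (_&?&_); auto.
  - intros k Hk. destruct (Nat.eq_dec k m) as [->|Hne]. rewrite HW2, HW1, Hm by lia; auto.
    rewrite !HW1 by lia. destruct (Hs k ltac:(lia)) as (_&_&?). apply adj_king; auto.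
  - intros f Hf Hfb. apply (wx_one _ _ _ m). lia. rewrite HW2, HW1, Hm by lia; auto.
    intros k Hk Hne. rewrite !HW1 by lia. apply Hf. destruct (Hs k ltac:(lia)) as (_&_&?); auto.
Qed.

Lemma edge_is_adj_false u v a b : site_adj u v -> ~ site_adj a b -> edge_is u v a b = false.
Proof.
  intros Ha Hab. destruct (edge_is u v a b) eqn:E; auto. exfalso. apply Hab.
  unfold edge_is, peqb in E. destruct u, v, a, b; simpl in *.
  rewrite orb_true_iff, !andb_true_iff, !Z.eqb_eq in E. unfold site_adj in *; simpl in *. lia.
Qed.

Lemma cl_of_V V x : V x -> closure V x.
Proof. left; auto. Qed.

Lemma no_checker_diag V (HV : site_connected V) d1 d2 :
  ~ (closure V (d1,d2) /\ closure V (d1+1,d2+1) /\ ~ closure V (d1+1,d2) /\ ~ closure V (d1,d2+1)).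
Proof.
  intros (c00&c11&n10&n01).
  assert (V00 : V (d1,d2)) by (apply (KL V _ (d1+1,d2)); auto; unfold site_adj; simpl; lia).
  assert (V11 : V (d1+1,d2+1)) by (apply (KL V _ (d1+1,d2)); auto; unfold site_adj; simpl; lia).
  destruct (closing_walk V (d1,d2) (d1+1,d2+1)) as (W&n&Hc&H0&HV'&Hk&Hwx).
  { apply HV; auto. } { unfold king; simpl; lia. }
  destruct (bound_walk W n) as [M HM].
  assert (Hnv : forall z, ~ closure V z -> forall k, (k <= n)%nat -> W k <> z).
  { intros z Hz k Hkn E. apply Hz. left. rewrite <- E. auto. }
  assert (Hx : xorb (P W n (d1+1,d2)) (P W n (d1,d2+1)) = true).
  { unfold P. rewrite (wx_combine _ _ (fun u v => edge_is u v (d1,d2) (d1+1,d2+1))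
       (fun w0 => (snd w0 =? d2 + 1) && (d1 <? fst w0)) W n Hc).
    - apply Hwx. intros u v Ha. apply edge_is_adj_false; auto. unfold site_adj; simpl; lia.
      unfold edge_is, peqb; simpl. rewrite !Z.eqb_refl. simpl. rewrite orb_true_r. auto.
    - intros k Hkn. apply (idD (d1,d2)); [apply Hk; auto| excl ..];
      apply Hnv; auto; lia. }
  assert (Htrap : forall z, ~ closure V z -> P W n z = true -> False).
  { intros z Hz HPz. apply (trap V (fun q => P W n q = true) (M+1) z); auto.
    - intros x Hx'. apply (P_box W n M x); auto.
    - intros u v Ha Hu Hv Hpu. rewrite <- Hpu. symmetry. apply P_step; auto;
      intros k Hk'; split; apply Hnv; auto. }
  destruct (P W n (d1+1,d2)) eqn:E1. eapply Htrap; [exact n10|exact E1].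
  destruct (P W n (d1,d2+1)) eqn:E2. eapply Htrap; [exact n01|exact E2]. discriminate.
Qed.

Lemma no_checker_anti V (HV : site_connected V) d1 d2 :
  ~ (closure V (d1+1,d2) /\ closure V (d1,d2+1) /\ ~ closure V (d1,d2) /\ ~ closure V (d1+1,d2+1)).
Proof.
  intros (c10&c01&n00&n11).
  assert (V10 : V (d1+1,d2)) by (apply (KL V _ (d1,d2)); auto; unfold site_adj; simpl; lia).
  assert (V01 : V (d1,d2+1)) by (apply (KL V _ (d1,d2)); auto; unfold site_adj; simpl; lia).
  destruct (closing_walk V (d1+1,d2) (d1,d2+1)) as (W&n&Hc&H0&HV'&Hk&Hwx).
  { apply HV; auto. } { unfold king; simpl; lia. }
  destruct (bound_walk W n) as [M HM].
  assert (Hnv : forall z, ~ closure V z -> forall k, (k <= n)%nat -> W k <> z).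
  { intros z Hz k Hkn E. apply Hz. left. rewrite <- E. auto. }
  assert (Hx : xorb (P W n (d1,d2)) (P W n (d1+1,d2+1)) = true).
  { unfold P. rewrite (wx_combine _ _ (fun u v => edge_is u v (d1+1,d2) (d1,d2+1))
       (fun w0 => (snd w0 =? d2 + 1) && (d1 <? fst w0)) W n Hc).
    - apply Hwx. intros u v Ha. apply edge_is_adj_false; auto. unfold site_adj; simpl; lia.
      unfold edge_is, peqb; simpl. rewrite !Z.eqb_refl. simpl. rewrite orb_true_r. auto.
    - intros k Hkn. apply (idA (d1,d2)); [apply Hk; auto| excl ..];
      apply Hnv; auto; lia. }
  assert (Htrap : forall z, ~ closure V z -> P W n z = true -> False).
  { intros z Hz HPz. apply (trap V (fun q => P W n q = true) (M+1) z); auto.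
    - intros x Hx'. apply (P_box W n M x); auto.
    - intros u v Ha Hu Hv Hpu. rewrite <- Hpu. symmetry. apply P_step; auto;
      intros k Hk'; split; apply Hnv; auto. }
  destruct (P W n (d1,d2)) eqn:E1. eapply Htrap; [exact n00|exact E1].
  destruct (P W n (d1+1,d2+1)) eqn:E2. eapply Htrap; [exact n11|exact E2]. discriminate.
Qed.

Lemma part1 V (HV : site_connected V) d : B_vertex V d -> degree_two V d.
Proof.
  destruct d as [d1 d2]. apply deg2_of.
  apply no_checker_diag; auto. apply no_checker_anti; auto.
Qed.

Lemma wx_exists f w n : wx f w n = true -> exists k, (k < n)%nat /\ f (w k) (w (S k)) = true.
Proof.
  induction n; simpl; intros HP. discriminate.
  destruct (f (w n) (w (S n))) eqn:E. exists n; split; auto.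
  rewrite xorb_false_r in HP. destruct (IHn HP) as [k [? ?]]. exists k; split; auto.
Qed.

Definition Sd w n (q : pt) := P w n (fst q - 1, snd q - 1).

Lemma bis_b_sym a b x y : bis_b a b x y = bis_b a b y x.
Proof. unfold bis_b. rewrite (Z.add_comm (fst x)), (Z.add_comm (snd x)). auto. Qed.

Lemma Sd_right w n q1 q2 : (forall k, (k < n)%nat -> unitb (w k) (w (S k))) ->
  xorb (Sd w n (q1, q2)) (Sd w n (q1 + 1, q2)) = wx (fun a b => bis_b a b (q1, q2) (q1 + 1, q2)) w n.
Proof.
  intros Hu. unfold Sd, P; simpl. replace (q1 + 1 - 1) with q1 by lia.
  rewrite <- wx_xor. apply wx_ext. intros k Hk. apply (idDH (q1,q2)). auto.
Qed.

Lemma Sd_up w n q1 q2 : w n = w 0%nat -> (forall k, (k < n)%nat -> unitb (w k) (w (S k))) ->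
  xorb (Sd w n (q1, q2)) (Sd w n (q1, q2 + 1)) = wx (fun a b => bis_b a b (q1, q2) (q1, q2 + 1)) w n.
Proof.
  intros Hc Hu. unfold Sd, P; simpl. replace (q2 + 1 - 1) with q2 by lia.
  apply (wx_combine _ _ _ (fun w0 => (snd w0 =? q2) && (q1 - 1 <? fst w0))); auto.
  intros k Hk. apply (idDV (q1,q2)). auto.
Qed.

Lemma Sd_step w n u v : w n = w 0%nat -> (forall k, (k < n)%nat -> unitb (w k) (w (S k))) ->
  site_adj u v -> xorb (Sd w n u) (Sd w n v) = wx (fun a b => bis_b a b u v) w n.
Proof.
  intros Hc Hu Ha. destruct u as [u1 u2], v as [v1 v2]. unfold site_adj in Ha; simpl in Ha.
  assert ((v1 = u1 + 1 /\ v2 = u2) \/ (v1 = u1 - 1 /\ v2 = u2) \/ (v1 = u1 /\ v2 = u2 + 1) \/ (v1 = u1 /\ v2 = u2 - 1))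
    as [(->&->)|[(->&->)|[(->&->)|(->&->)]]] by lia.
  - apply Sd_right; auto.
  - rewrite xorb_comm. replace (u1, u2) with (u1 - 1 + 1, u2) by (f_equal; lia).
    rewrite Sd_right; auto. apply wx_ext. intros; apply bis_b_sym.
  - apply Sd_up; auto.
  - rewrite xorb_comm. replace (u1, u2) with (u1, u2 - 1 + 1) by (f_equal; lia).
    rewrite Sd_up; auto. apply wx_ext. intros; apply bis_b_sym.
Qed.

Lemma unit_king u v : unitb u v -> king u v.
Proof. unfold unitb, king. lia. Qed.

Lemma part3 V (HV : site_connected V) : ~ finite_set V -> forall n c, ~ B_circuit V n c.
Proof.
  intros HnF n c (Hn3&Hinj&Hedge).
  set (W := fun k => c (k mod n)%nat).
  assert (HWk : forall k, (k < n)%nat -> W k = c k) by (intros; unfold W; rewrite Nat.mod_small; auto).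
  assert (Hc : W n = W 0%nat) by (unfold W; rewrite Nat.Div0.mod_same, Nat.Div0.mod_0_l by lia; auto).
  assert (HE : forall k, (k < n)%nat -> B_edge V (W k) (W (S k))).
  { intros k Hk. rewrite HWk by auto. apply Hedge; auto. }
  assert (HU : forall k, (k < n)%nat -> unitb (W k) (W (S k))).
  { intros k Hk. destruct (HE k Hk) as (x&y&Hb&_). rewrite bisects_iff in Hb. tauto. }
  destruct (bound_walk W n) as [M HM].
  assert (Hbox : forall q, Sd W n q = true -> Z.abs (fst q) <= M + 2 /\ Z.abs (snd q) <= M + 2).
  { intros q Hq. apply (P_box W n M) in Hq; auto. simpl in Hq. lia. intros; apply unit_king; auto. }
  assert (Hsame : forall u v, site_adj u v -> (closure V u <-> closure V v) -> Sd W n u = Sd W n v).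
  { intros u v Ha Hiff. pose proof (Sd_step W n u v Hc HU Ha) as H.
    destruct (wx (fun a b => bis_b a b u v) W n) eqn:E.
    - exfalso. apply wx_exists in E. destruct E as (k&Hk&Hb).
      destruct (HE k Hk) as (x&y&Hxy&Hx&Hy).
      assert (Hb' : bisects (W k) (W (S k)) u v).
      { rewrite bisects_iff. split; [auto|split; auto]. }
      destruct (bis_uniq_primal _ _ _ _ _ _ Hxy Hb') as [(->&->)|(->&->)]; tauto.
    - destruct (Sd W n u), (Sd W n v); simpl in H; congruence. }
  destruct (HE 0%nat ltac:(lia)) as (x&y&Hxy&Hx&Hy).
  assert (Hxor : xorb (Sd W n x) (Sd W n y) = true).
  { rewrite Sd_step; auto. 2: { apply bisects_iff in Hxy. tauto. }
    apply (wx_one _ _ _ 0%nat). lia. apply bisects_iff in Hxy; tauto.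
    intros k Hk Hk0. destruct (bis_b (W k) (W (S k)) x y) eqn:E; auto. exfalso.
    assert (Hb' : bisects (W k) (W (S k)) x y).
    { apply bisects_iff in Hxy. rewrite bisects_iff. split; [auto|split; tauto]. }
    destruct (bis_uniq_dual _ _ _ _ _ _ Hb' Hxy) as [(E1&E2)|(E1&E2)].
    - rewrite !HWk in E1 by lia. apply Hinj in E1; lia.
    - rewrite !HWk in E1 by lia. apply Hinj in E1; try lia. subst k.
      rewrite !HWk in E2 by lia. apply Hinj in E2; lia. }
  destruct (Sd W n y) eqn:Ey.
  - apply (trap V (fun q => Sd W n q = true) (M+2) y); auto.
    intros u v Ha Hu Hv Hsu. rewrite <- Hsu. symmetry. apply Hsame; auto. tauto.
  - assert (Sx : Sd W n x = true) by (destruct (Sd W n x); auto).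
    assert (Vx : V x) by (apply (KL V x y); auto; apply bisects_iff in Hxy; unfold site_adj, unitb in *; tauto).
    apply HnF. apply (box_finite V (M+2)). intros v Vv. apply Hbox.
    apply (V_in_S V (fun q => Sd W n q = true) x HV Vx Sx); auto.
    intros u w Ha Hu Hw Hsu. rewrite <- Hsu. symmetry. apply Hsame; auto. split; intros; left; auto.
Qed.

Definition othP V a p r := B_edge V a r /\ r <> p /\ forall e, B_edge V a e -> e = p \/ e = r.
Definition oth V a p : pt := epsilon (inhabits a) (othP V a p).

Lemma oth_spec V (HV : site_connected V) a p : B_edge V a p -> othP V a p (oth V a p).
Proof.
  intros H. unfold oth. apply epsilon_spec.
  destruct (part1 V HV a (ex_intro _ p H)) as (e1&e2&Hne&H1&H2&Hall).
  destruct (Hall p H) as [->| ->].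
  - exists e2. split; [auto|split; [auto|]]. auto.
  - exists e1. split; [auto|split; [auto|]]. intros e He. destruct (Hall e He); auto.
Qed.

Definition stp V (s : pt * pt) : pt * pt := (snd s, oth V (snd s) (fst s)).
Fixpoint sq V s0 (k : nat) : pt * pt := match k with O => s0 | S k => stp V (sq V s0 k) end.

Lemma sq_inv V (HV : site_connected V) s0 : B_edge V (fst s0) (snd s0) ->
  forall k, B_edge V (fst (sq V s0 k)) (snd (sq V s0 k)).
Proof.
  intros H k. induction k; simpl; auto.
  destruct (oth_spec V HV (snd (sq V s0 k)) (fst (sq V s0 k))) as (?&_&_); auto.
  apply bedge_sym; auto.
Qed.

Lemma sq_nb V (HV : site_connected V) s0 : B_edge V (fst s0) (snd s0) -> forall k,
  othP V (snd (sq V s0 k)) (fst (sq V s0 k)) (snd (sq V s0 (S k))).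
Proof.
  intros H k. simpl. apply oth_spec; auto. apply bedge_sym, sq_inv; auto.
Qed.

Lemma construct V (HV : site_connected V) d : B_vertex V d ->
  exists f : Z -> pt, f 0 = d /\ (forall i, B_edge V (f i) (f (i+1))) /\ (forall i, f (i-1) <> f (i+1)) /\
    (forall i e, B_edge V (f i) e -> e = f (i-1) \/ e = f (i+1)).
Proof.
  intros [e0 He0].
  set (s0 := (e0, d)). assert (Hs0 : B_edge V (fst s0) (snd s0)) by (apply bedge_sym; auto).
  set (Ff := fun k => snd (sq V s0 k)).
  set (r := Ff 1%nat).
  set (t0 := (r, d)).
  destruct (sq_nb V HV s0 Hs0 0) as (Hdr&Hre0&Hdall). simpl in Hdr, Hre0, Hdall.
  assert (Ht0 : B_edge V (fst t0) (snd t0)) by (apply bedge_sym; auto).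
  set (Bf := fun k => snd (sq V t0 k)).
  destruct (sq_nb V HV t0 Ht0 0) as (Hdb&Hbr&_). simpl in Hdb, Hbr.
  assert (HB1 : Bf 1%nat = e0).
  { destruct (Hdall _ Hdb) as [E|E]; auto. exfalso. apply Hbr. rewrite E. auto. }
  set (f := fun i => if 0 <=? i then Ff (Z.to_nat i) else Bf (Z.to_nat (- i))).
  assert (fpos : forall k, f (Z.of_nat k) = Ff k).
  { intros k. unfold f. rewrite (proj2 (Z.leb_le 0 _)) by lia. rewrite Nat2Z.id. auto. }
  assert (fneg : forall k, f (- Z.of_nat k) = Bf k).
  { intros k. unfold f. destruct k. simpl. auto.
    rewrite (proj2 (Z.leb_gt 0 _)) by lia. rewrite Z.opp_involutive, Nat2Z.id. auto. }
  assert (Fst : forall k, fst (sq V s0 (S k)) = Ff k) by (intros; auto).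
  assert (Bst : forall k, fst (sq V t0 (S k)) = Bf k) by (intros; auto).
  exists f. split; [|split; [|split]].
  - apply (fpos 0%nat).
  - intros i. destruct (Z_le_gt_dec 0 i) as [Hi|Hi].
    + replace i with (Z.of_nat (Z.to_nat i)) by lia. replace (Z.of_nat (Z.to_nat i) + 1) with (Z.of_nat (S (Z.to_nat i))) by lia.
      rewrite !fpos. pose proof (sq_inv V HV s0 Hs0 (S (Z.to_nat i))). rewrite Fst in H. auto.
    + replace i with (- Z.of_nat (S (Z.to_nat (- i - 1)))) by lia.
      replace (- Z.of_nat (S (Z.to_nat (- i - 1))) + 1) with (- Z.of_nat (Z.to_nat (- i - 1))) by lia.
      rewrite !fneg. apply bedge_sym. pose proof (sq_inv V HV t0 Ht0 (S (Z.to_nat (- i - 1)))). rewrite Bst in H. auto.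
  - intros i. destruct (Z_le_gt_dec 1 i) as [Hi|Hi]; [|destruct (Z.eq_dec i 0) as [->|Hi0]].
    + replace (i - 1) with (Z.of_nat (Z.to_nat (i - 1))) by lia.
      replace (i + 1) with (Z.of_nat (S (S (Z.to_nat (i - 1))))) by lia. rewrite !fpos.
      destruct (sq_nb V HV s0 Hs0 (S (Z.to_nat (i - 1)))) as (_&Hne&_). rewrite Fst in Hne. auto.
    + simpl. change (-1) with (- Z.of_nat 1). rewrite fneg. change 1 with (Z.of_nat 1). rewrite fpos.
      rewrite HB1. auto.
    + replace (i + 1) with (- Z.of_nat (Z.to_nat (- i - 1))) by lia.
      replace (i - 1) with (- Z.of_nat (S (S (Z.to_nat (- i - 1))))) by lia. rewrite !fneg.
      destruct (sq_nb V HV t0 Ht0 (S (Z.to_nat (- i - 1)))) as (_&Hne&_). rewrite Bst in Hne. auto.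
  - intros i e He. destruct (Z_le_gt_dec 1 i) as [Hi|Hi]; [|destruct (Z.eq_dec i 0) as [->|Hi0]].
    + replace (i - 1) with (Z.of_nat (Z.to_nat (i - 1))) in * by lia.
      replace (i + 1) with (Z.of_nat (S (S (Z.to_nat (i - 1))))) by lia.
      replace i with (Z.of_nat (S (Z.to_nat (i - 1)))) in He by lia. rewrite !fpos in *.
      destruct (sq_nb V HV s0 Hs0 (S (Z.to_nat (i - 1)))) as (_&_&Hall). rewrite Fst in Hall. apply Hall; auto.
    + simpl. change (-1) with (- Z.of_nat 1). rewrite fneg. change 1 with (Z.of_nat 1). rewrite fpos.
      rewrite HB1. change (f 0) with d in He. destruct (Hdall e He); auto.
    + replace (i + 1) with (- Z.of_nat (Z.to_nat (- i - 1))) by lia.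
      replace (i - 1) with (- Z.of_nat (S (S (Z.to_nat (- i - 1))))) by lia.
      replace i with (- Z.of_nat (S (Z.to_nat (- i - 1)))) in He by lia. rewrite !fneg in *.
      destruct (sq_nb V HV t0 Ht0 (S (Z.to_nat (- i - 1)))) as (_&_&Hall). rewrite Bst in Hall.
      destruct (Hall e He); auto.
Qed.

Lemma nat_min (Pr : nat -> Prop) n : Pr n -> exists m, Pr m /\ forall k, (k < m)%nat -> ~ Pr k.
Proof.
  induction n as [n IH] using (well_founded_induction lt_wf). intros Hn.
  destruct (classic (exists k, (k < n)%nat /\ Pr k)) as [[k [Hk Pk]]|H].
  - apply (IH k Hk Pk).
  - exists n; split; auto. intros k Hk Pk. apply H; eauto.
Qed.

Lemma comp_struct (V : pset) (d : pt) (f : Z -> pt) (Hf0 : f 0 = d)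
  (HE : forall i, B_edge V (f i) (f (i+1))) (Hne : forall i, f (i-1) <> f (i+1))
  (Hall : forall i e, B_edge V (f i) e -> e = f (i-1) \/ e = f (i+1)) :
  component_is_circuit V d \/ component_is_biinf_path V d.
Proof.
assert (fE : forall x y, x = y -> f x = f y) by (intros x y ->; auto).

assert (HEb : forall i, B_edge V (f i) (f (i-1))).
{ intros i. apply bedge_sym. replace (f i) with (f (i - 1 + 1)) by (apply fE; lia). apply HE. }

assert (reach : forall i, B_conn V d (f i)).
{
  assert (H : forall k : nat, B_conn V d (f (Z.of_nat k)) /\ B_conn V d (f (- Z.of_nat k))).
  { induction k as [|k [IH1 IH2]]; simpl. rewrite Hf0; split; apply rt_refl.
    split.
    - eapply rt_trans; [exact IH1|]. apply rt_step. rewrite (fE (Z.pos _) (Z.of_nat k + 1)) by lia. apply HE.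
    - eapply rt_trans; [exact IH2|]. apply rt_step. rewrite (fE (Z.neg _) (- Z.of_nat k - 1)) by lia. apply HEb. }
  intros i. destruct (Z_le_gt_dec 0 i).
  - rewrite (fE i (Z.of_nat (Z.to_nat i))) by lia. apply H.
  - rewrite (fE i (- Z.of_nat (Z.to_nat (- i)))) by lia. apply H.
}

assert (closed : forall v, B_conn V d v -> exists i, v = f i).
{ intros v.
  intros H. apply clos_rt_rtn1_iff in H. induction H as [|y z Hyz Hr IH].
  - exists 0; auto.
  - destruct IH as [i ->]. destruct (Hall i z Hyz) as [->| ->]; eauto.
}

assert (trans_lem : forall a b, f a = f b -> f (a+1) = f (b+1) -> forall k, f (a+k) = f (b+k)).
{ intros a b.
  intros H0 H1.
  assert (HQ : forall x, f (a+x) = f (b+x) /\ f (a+x+1) = f (b+x+1)).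
  { apply Z.peano_ind.
    - rewrite !Z.add_0_r. auto.
    - intros x [Q1 Q2]. unfold Z.succ. split. rewrite !Z.add_assoc; auto.
      pose proof (HE (a+x+1)) as He. rewrite Q2 in He. apply Hall in He.
      destruct He as [He|He].
      + exfalso. apply (Hne (a+x+1)). rewrite (fE (a+x+1-1) (a+x)) by lia.
        rewrite Q1, He. apply fE; lia.
      + rewrite (fE (a+(x+1)+1) (a+x+1+1)) by lia. rewrite He. apply fE; lia.
    - intros x [Q1 Q2]. unfold Z.pred. split.
      + pose proof (HEb (a+x)) as He. rewrite Q1 in He. apply Hall in He.
        destruct He as [He|He].
        * rewrite (fE (a+(x + -1)) (a+x-1)) by lia. rewrite He. apply fE; lia.
        * exfalso. apply (Hne (a+x)). rewrite He, Q2. reflexivity.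
      + rewrite (fE (a+(x + -1)+1) (a+x)) by lia. rewrite Q1. apply fE; lia. }
  intros k. apply HQ.
}

assert (refl_lem : forall a b, a < b -> f a = f b -> f (a+1) = f (b-1) -> False).
{ intros a b.
  intros Hab H0 H1.
  assert (HQ : forall k : nat, f (a + Z.of_nat k) = f (b - Z.of_nat k) /\ f (a + Z.of_nat k + 1) = f (b - Z.of_nat k - 1)).
  { induction k as [|k [Q1 Q2]].
    - simpl. rewrite Z.add_0_r, Z.sub_0_r. auto.
    - split. rewrite (fE (a + Z.of_nat (S k)) (a + Z.of_nat k + 1)) by lia. rewrite Q2. apply fE; lia.
      pose proof (HE (a + Z.of_nat k + 1)) as He. rewrite Q2 in He. apply Hall in He.
      destruct He as [He|He].
      + rewrite (fE (a + Z.of_nat (S k) + 1) (a + Z.of_nat k + 1 + 1)) by lia. rewrite He. apply fE; lia.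
      + exfalso. apply (Hne (a + Z.of_nat k + 1)). rewrite (fE (a + Z.of_nat k + 1 - 1) (a + Z.of_nat k)) by lia.
        rewrite Q1, He. apply fE; lia. }
  pose proof (Z.div_mod (b - a) 2 ltac:(lia)) as Hdm. pose proof (Z.mod_pos_bound (b - a) 2 ltac:(lia)) as Hmb.
  set (m := (b - a) / 2) in *. set (r := (b - a) mod 2) in *.
  assert (r = 0 \/ r = 1) as [Hr|Hr] by lia.
  - destruct (HQ (Z.to_nat m)) as [_ Q2]. apply (Hne (a + m)).
    rewrite (fE (a + m + 1) (a + Z.of_nat (Z.to_nat m) + 1)) by lia. rewrite Q2. apply fE; lia.
  - destruct (HQ (Z.to_nat m)) as [Q1 _]. apply (bedge_irr V (f (a + m))).
    pose proof (HE (a + m)) as He. rewrite (fE (a + m + 1) (b - Z.of_nat (Z.to_nat m))) in He by lia.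
    rewrite <- Q1 in He. rewrite (fE (a + Z.of_nat (Z.to_nat m)) (a + m)) in He by lia. auto.
}

assert (period_lem : forall a b, a < b -> f a = f b -> forall x, f (x + (b - a)) = f x).
{ intros a b.
  intros Hab H0. pose proof (HE a) as He. rewrite H0 in He. apply Hall in He.
  destruct He as [He|He].
  - exfalso. apply (refl_lem a b); auto.
  - intros x. pose proof (trans_lem a b H0 He (x - a)) as Ht.
    rewrite (fE (a + (x - a)) x) in Ht by lia. rewrite Ht. apply fE; lia.
}

  destruct (classic (forall i j, f i = f j -> i = j)) as [Hinj|Hni].
  - right. exists f. split; [auto|split; [auto|split]].
    + intros v. split. apply closed. intros [i ->]. apply reach.
    + intros u v Hu. destruct (closed u Hu) as [j ->]. split.
      * intros Hv. destruct (Hall j v Hv) as [->| ->].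
        -- exists (j - 1). right. split; auto. apply fE; lia.
        -- exists j. left; auto.
      * intros [i [[-> ->]|[-> ->]]]. apply HE. apply bedge_sym, HE.
  - left.
    assert (Hij : exists i j, i < j /\ f i = f j).
    { apply not_all_ex_not in Hni. destruct Hni as [i Hi]. apply not_all_ex_not in Hi. destruct Hi as [j Hj].
      destruct (classic (f i = f j)) as [E|E]; [|exfalso; apply Hj; intros; contradiction].
      assert (i <> j) by (intro; apply Hj; auto).
      destruct (Z_lt_le_dec i j). exists i, j; auto. exists j, i; split; auto; lia. }
    destruct Hij as (i&j&Hlt&Heq).
    pose proof (period_lem i j Hlt Heq) as Hper.
    destruct (nat_min (fun N => (0 < N)%nat /\ f (Z.of_nat N) = f 0) (Z.to_nat (j - i))) as (N&[HN0 HN]&Hmin).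
    { split. lia. rewrite <- (Hper 0). apply fE; lia. }
    pose proof (period_lem 0 (Z.of_nat N) ltac:(lia) (eq_sym HN)) as HpN.
    assert (Hpk : forall x k, f (x + Z.of_nat N * k) = f x).
    { intros x. apply Z.peano_ind.
      - rewrite Z.mul_0_r, Z.add_0_r; auto.
      - intros k IH. rewrite <- IH. rewrite <- (HpN (x + Z.of_nat N * k)). apply fE; nia.
      - intros k IH. rewrite <- IH. rewrite <- (HpN (x + Z.of_nat N * Z.pred k)). apply fE; nia. }
    assert (Hmod : forall x, f x = f (x mod Z.of_nat N)).
    { intros x. rewrite (Z.div_mod x (Z.of_nat N)) at 1 by lia. rewrite Z.add_comm. apply Hpk. }
    assert (Hmodeq : forall x y, x mod Z.of_nat N = y mod Z.of_nat N -> f x = f y).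
    { intros x y E. rewrite (Hmod x), (Hmod y), E. auto. }
    set (c := fun k => f (Z.of_nat k)).
    assert (Hcmod : forall k, c (k mod N)%nat = c k).
    { intros k. unfold c. apply Hmodeq. rewrite Nat2Z.inj_mod, Z.mod_mod; auto; lia. }
    assert (Hdist : forall a b, (a < N)%nat -> (b < N)%nat -> c a = c b -> a = b).
    { assert (H1 : forall a b, (a < b < N)%nat -> c a = c b -> False).
      { intros a b Hab E. unfold c in E. pose proof (period_lem (Z.of_nat a) (Z.of_nat b) ltac:(lia) E 0) as H.
        apply (Hmin (b - a)%nat ltac:(lia)). split. lia. rewrite <- H. apply fE; lia. }
      intros a b Ha Hb E. destruct (Nat.lt_total a b) as [H|[H|H]]; auto.
      exfalso; apply (H1 a b); auto. exfalso; apply (H1 b a); auto. }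
    assert (HN3 : (3 <= N)%nat).
    { destruct (Nat.eq_dec N 1) as [->|]. exfalso. apply (bedge_irr V (f 0)).
      pose proof (HE 0) as He. simpl in He, HN. rewrite HN in He. auto.
      destruct (Nat.eq_dec N 2) as [->|]. exfalso. apply (Hne 1). simpl in HN. simpl. rewrite HN. auto. lia. }
    assert (Hce : forall a, B_edge V (c a) (c ((S a) mod N)%nat)).
    { intros a. rewrite Hcmod. unfold c. rewrite Nat2Z.inj_succ. apply HE. }
    exists N, c. split; [split; [auto|split; auto]|split].
    + intros v. split.
      * intros Hv. destruct (closed v Hv) as [x ->]. exists (Z.to_nat (x mod Z.of_nat N)).
        pose proof (Z.mod_pos_bound x (Z.of_nat N) ltac:(lia)). split. lia.
        unfold c. rewrite Z2Nat.id by lia. apply Hmod.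
      * intros [a [_ ->]]. apply reach.
    + intros u v Hu. destruct (closed u Hu) as [x ->]. split.
      * intros Hv. destruct (Hall x v Hv) as [->| ->].
        -- pose proof (Z.mod_pos_bound (x - 1) (Z.of_nat N) ltac:(lia)).
           exists (Z.to_nat ((x - 1) mod Z.of_nat N)). split. lia. right. split.
           unfold c. rewrite Z2Nat.id by lia. apply Hmod.
           rewrite Hcmod. unfold c. apply Hmodeq. rewrite Nat2Z.inj_succ, Z2Nat.id by lia.
           unfold Z.succ. rewrite Z.add_mod_idemp_l by lia. f_equal. lia.
        -- pose proof (Z.mod_pos_bound x (Z.of_nat N) ltac:(lia)).
           exists (Z.to_nat (x mod Z.of_nat N)). split. lia. left. split.
           unfold c. rewrite Z2Nat.id by lia. apply Hmod.
           rewrite Hcmod. unfold c. apply Hmodeq. rewrite Nat2Z.inj_succ, Z2Nat.id by lia.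
           unfold Z.succ. rewrite Z.add_mod_idemp_l by lia. auto.
      * intros [a [_ [[E ->]|[-> E]]]].
        -- rewrite E. apply Hce.
        -- rewrite E. apply bedge_sym, Hce.
Qed.



Theorem lemma3 (V : pset) (HV : site_connected V) :
  (forall d, B_vertex V d -> degree_two V d) /\
  (forall d, B_vertex V d ->
     component_is_circuit V d \/ component_is_biinf_path V d) /\
  (~ finite_set V -> forall n c, ~ B_circuit V n c).
Proof.
  split; [|split].
  - exact (part1 V HV).
  - intros d Hd. destruct (construct V HV d Hd) as (f&H0&H1&H2&H3).
    apply (comp_struct V d f); auto.
  - exact (part3 V HV).
Qed.

Print Assumptions lemma3.
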